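(* Let $d:\mathbb{Z}\to\mathbb{C}$ be bounded and $(Ju)(n)=u(n-1)+d(n)u(n)+u(n+1)$ on $\ell^2(\mathbb{Z})$. Suppose that $\Im(d(n))\to0$ as $n\to+\infty$ (or as $n\to-\infty$) and that there exists $m\in\mathbb{Z}$ with $\Im(d(m))\ne0$ and $\Im(d(m+1))\ne0$. Then $J$ has no boundary eigenvalues.
   Context: The numerical range is $\operatorname{Num}(J)=\{\langle Ju,u\rangle:\|u\|=1\}$, and a boundary eigenvalue of $J$ is an eigenvalue of $J$ lying in the topological boundary of $\operatorname{Num}(J)$. *)

(* Defs.v *)
From Stdlib Require Import Reals ZArith.
Open Scope R_scope.

Definition Cplx : Type := (R * R)%type.
Definition Re (z : Cplx) : R := fst z.
Definition Im (z : Cplx) : R := snd z.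
Definition C0 : Cplx := (0, 0).
Definition Cadd (z w : Cplx) : Cplx := (Re z + Re w, Im z + Im w).
Definition Csub (z w : Cplx) : Cplx := (Re z - Re w, Im z - Im w).
Definition Cmul (z w : Cplx) : Cplx :=
  (Re z * Re w - Im z * Im w, Re z * Im w + Im z * Re w).
Definition Cconj (z : Cplx) : Cplx := (Re z, - Im z).
Definition Cnorm2 (z : Cplx) : R := Re z ^ 2 + Im z ^ 2.
Definition Cmod (z : Cplx) : R := sqrt (Cnorm2 z).

(* Series indexed by Z: sum_{n in Z} f n = l, with the terms enumerated as
   f 0 + f (-1) + f 1 + f (-2) + ... (pairs f k + f (-k-1), k = 0,1,...). *)
Definition Zseries (f : Z -> R) (l : R) : Prop :=
  infinite_sum (fun k : nat => f (Z.of_nat k) + f (- Z.of_nat k - 1)%Z) l.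
Definition ZseriesC (f : Z -> Cplx) (z : Cplx) : Prop :=
  Zseries (fun n => Re (f n)) (Re z) /\ Zseries (fun n => Im (f n)) (Im z).

Definition in_l2 (u : Z -> Cplx) : Prop := exists l, Zseries (fun n => Cnorm2 (u n)) l.
Definition l2_norm2_is (u : Z -> Cplx) (s : R) : Prop := Zseries (fun n => Cnorm2 (u n)) s.
Definition inner_is (v u : Z -> Cplx) (z : Cplx) : Prop :=
  ZseriesC (fun n => Cmul (v n) (Cconj (u n))) z.

Definition Jop (d : Z -> Cplx) (u : Z -> Cplx) : Z -> Cplx :=
  fun n => Cadd (Cadd (u (n - 1)%Z) (Cmul (d n) (u n))) (u (n + 1)%Z).

Definition NumRange (d : Z -> Cplx) (z : Cplx) : Prop :=
  exists u : Z -> Cplx, l2_norm2_is u 1 /\ inner_is (Jop d u) u z.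

Definition is_eigenvalue (d : Z -> Cplx) (lam : Cplx) : Prop :=
  exists u : Z -> Cplx, in_l2 u /\ (exists n, u n <> C0) /\
    forall n, Jop d u n = Cmul lam (u n).

Definition in_closure (S : Cplx -> Prop) (z : Cplx) : Prop :=
  forall eps, 0 < eps -> exists w, S w /\ Cmod (Csub w z) < eps.
Definition in_interior (S : Cplx -> Prop) (z : Cplx) : Prop :=
  exists eps, 0 < eps /\ forall w, Cmod (Csub w z) < eps -> S w.
Definition in_boundary (S : Cplx -> Prop) (z : Cplx) : Prop :=
  in_closure S z /\ ~ in_interior S z.

Definition is_boundary_eigenvalue (d : Z -> Cplx) (lam : Cplx) : Prop :=
  is_eigenvalue d lam /\ in_boundary (NumRange d) lam.

(* Main.v *)
Require Import Defs.
From Stdlib Require Import Reals ZArith Lra Lia Psatz Classical.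
From Coquelicot Require Coquelicot.
Open Scope R_scope.
Module SerL.
Import Coquelicot.Coquelicot.
Lemma isum_plus s t l1 l2 : infinite_sum s l1 -> infinite_sum t l2 ->
  infinite_sum (fun k => s k + t k) (l1 + l2).
Proof.
  intros H1 H2. apply is_series_Reals in H1. apply is_series_Reals in H2.
  apply is_series_Reals. exact (is_series_plus _ _ _ _ H1 H2).
Qed.
Lemma isum_scal a s l : infinite_sum s l -> infinite_sum (fun k => a * s k) (a * l).
Proof.
  intros H1. apply is_series_Reals in H1.
  apply is_series_Reals. exact (is_series_scal a _ _ H1).
Qed.
Lemma isum_ext s t l : (forall k, s k = t k) -> infinite_sum s l -> infinite_sum t l.
Proof.
  intros E H1. apply is_series_Reals in H1.
  apply is_series_Reals. exact (is_series_ext _ _ _ E H1).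
Qed.
End SerL.
Import SerL.

Lemma sum_single_lt (s : nat -> R) k0 : (forall k, k <> k0 -> s k = 0) ->
  forall n, (n < k0)%nat -> sum_f_R0 s n = 0.
Proof.
  intros H n. induction n; intros Hn; simpl.
  - apply H; lia.
  - rewrite IHn by lia. rewrite H by lia. ring.
Qed.

Lemma sum_single_ge (s : nat -> R) k0 : (forall k, k <> k0 -> s k = 0) ->
  forall n, (k0 <= n)%nat -> sum_f_R0 s n = s k0.
Proof.
  intros H n. induction n; intros Hn.
  - replace k0 with 0%nat by lia. reflexivity.
  - destruct (Nat.eq_dec k0 (S n)) as [E|E].
    + subst k0. simpl. destruct n. simpl. rewrite H by lia. ring.
      rewrite (sum_single_lt s (S (S n)) H) by lia. ring.
    + simpl. rewrite IHn by lia. rewrite (H (S n)) by lia. ring.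
Qed.

Lemma isum_single (s : nat -> R) k0 : (forall k, k <> k0 -> s k = 0) ->
  infinite_sum s (s k0).
Proof.
  intros H eps He. exists k0. intros n Hn. rewrite (sum_single_ge s k0 H n Hn).
  unfold Rdist. rewrite Rminus_eq_0, Rabs_R0. lra.
Qed.

Lemma Zseries_plus f g l1 l2 : Zseries f l1 -> Zseries g l2 ->
  Zseries (fun n => f n + g n) (l1 + l2).
Proof.
  intros H1 H2. unfold Zseries. eapply isum_ext; [|exact (isum_plus _ _ _ _ H1 H2)].
  intros k; simpl; ring.
Qed.

Lemma Zseries_scal a f l : Zseries f l -> Zseries (fun n => a * f n) (a * l).
Proof.
  intros H1. unfold Zseries. eapply isum_ext; [|exact (isum_scal a _ _ H1)].
  intros k; simpl; ring.
Qed.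

Lemma Zseries_ext f g l : (forall n, f n = g n) -> Zseries f l -> Zseries g l.
Proof.
  intros E H1. unfold Zseries. eapply isum_ext; [|exact H1].
  intros k; simpl; rewrite !E; ring.
Qed.

Definition zdelta (i : Z) (c : R) (n : Z) : R := if Z.eq_dec n i then c else 0.

Lemma Zseries_delta i c : Zseries (zdelta i c) c.
Proof.
  unfold Zseries.
  set (k0 := if Z_le_dec 0 i then Z.to_nat i else Z.to_nat (- i - 1)).
  assert (H : forall k, k <> k0 ->
     zdelta i c (Z.of_nat k) + zdelta i c (- Z.of_nat k - 1) = 0).
  { intros k Hk. unfold zdelta, k0 in *.
    destruct (Z.eq_dec (Z.of_nat k) i); destruct (Z.eq_dec (- Z.of_nat k - 1) i);
    destruct (Z_le_dec 0 i); try lia; ring. }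
  assert (Hv : zdelta i c (Z.of_nat k0) + zdelta i c (- Z.of_nat k0 - 1) = c).
  { unfold zdelta, k0.
    destruct (Z_le_dec 0 i).
    + rewrite Z2Nat.id by lia. destruct (Z.eq_dec i i); [|lia].
      destruct (Z.eq_dec (- i - 1) i); [lia|]. ring.
    + rewrite Z2Nat.id by lia. destruct (Z.eq_dec (- i - 1) i); [lia|].
      destruct (Z.eq_dec (- (- i - 1) - 1) i); [|lia]. ring. }
  pose proof (isum_single _ k0 H) as Hs. cbv beta in Hs. rewrite Hv in Hs. exact Hs.
Qed.

Lemma Zseries_3 (f g : Z -> R) (a l : R) (j : Z) :
  Zseries f l ->
  (forall n, n <> (j-1)%Z -> n <> j -> n <> (j+1)%Z -> g n = a * f n) ->
  Zseries g (a * l + (g (j-1)%Z - a * f (j-1)%Z) + (g j - a * f j)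
               + (g (j+1)%Z - a * f (j+1)%Z)).
Proof.
  intros Hf Hg.
  pose proof (Zseries_plus _ _ _ _ (Zseries_plus _ _ _ _
     (Zseries_plus _ _ _ _ (Zseries_scal a _ _ Hf)
        (Zseries_delta (j-1) (g (j-1)%Z - a * f (j-1)%Z)))
        (Zseries_delta j (g j - a * f j)))
        (Zseries_delta (j+1) (g (j+1)%Z - a * f (j+1)%Z))) as H.
  eapply Zseries_ext; [|exact H]. intros n; unfold zdelta.
  destruct (Z.eq_dec n (j-1)) as [->|]; [destruct (Z.eq_dec (j-1) j); [lia|];
    destruct (Z.eq_dec (j-1) (j+1)); [lia|]; ring|].
  destruct (Z.eq_dec n j) as [->|]; [destruct (Z.eq_dec j (j+1)); [lia|]; ring|].
  destruct (Z.eq_dec n (j+1)) as [->|]; [ring|].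
  rewrite Hg by assumption. ring.
Qed.

Lemma Zseries_ge f l i : Zseries f l -> (forall n, 0 <= f n) -> f i <= l.
Proof.
  intros H Hnn.
  set (s := fun k : nat => f (Z.of_nat k) + f (- Z.of_nat k - 1)%Z).
  set (k0 := if Z_le_dec 0 i then Z.to_nat i else Z.to_nat (- i - 1)).
  assert (Hg : Un_growing (sum_f_R0 s)).
  { intros n. simpl. unfold s. pose proof (Hnn (Z.of_nat (S n))).
    pose proof (Hnn (- Z.of_nat (S n) - 1)%Z). lra. }
  assert (Hc : Un_cv (sum_f_R0 s) l).
  { intros eps He. destruct (H eps He) as [N HN]. exists N. intros n Hn.
    apply HN. lia. }
  pose proof (growing_ineq _ _ Hg Hc k0) as Hle.
  assert (Hs : f i <= s k0).
  { unfold s, k0. destruct (Z_le_dec 0 i).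
    - rewrite Z2Nat.id by lia. pose proof (Hnn (- i - 1)%Z). lra.
    - rewrite Z2Nat.id by lia. replace (- (- i - 1) - 1)%Z with i by lia.
      pose proof (Hnn (- i - 1)%Z). lra. }
  assert (Hsum : forall n, 0 <= sum_f_R0 s n).
  { induction n; simpl.
    - unfold s; apply Rplus_le_le_0_compat; apply Hnn.
    - apply Rplus_le_le_0_compat; [exact IHn|unfold s; apply Rplus_le_le_0_compat; apply Hnn]. }
  destruct k0 eqn:Ek.
  - simpl in Hle. lra.
  - simpl in Hle. pose proof (Hsum n). lra.
Qed.

Lemma Zseries_pos f l i : Zseries f l -> (forall n, 0 <= f n) -> 0 < f i -> 0 < l.
Proof. intros H Hn Hi. pose proof (Zseries_ge f l i H Hn). lra. Qed.


Lemma Cplx_eq (z w : Cplx) : fst z = fst w -> snd z = snd w -> z = w.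
Proof. destruct z, w; simpl; intros -> ->; reflexivity. Qed.

Lemma step_fwd d u l n : Jop d u n = Cmul l (u n) -> u (n-1)%Z = C0 -> u n = C0 ->
  u (n+1)%Z = C0.
Proof.
  intros H H1 H2. unfold Jop in H. rewrite H1, H2 in H.
  pose proof (f_equal fst H) as Ha. pose proof (f_equal snd H) as Hb.
  unfold Cadd, Cmul, C0, Re, Im in *; simpl in *.
  apply Cplx_eq; simpl; lra.
Qed.

Lemma step_bwd d u l n : Jop d u n = Cmul l (u n) -> u n = C0 -> u (n+1)%Z = C0 ->
  u (n-1)%Z = C0.
Proof.
  intros H H1 H2. unfold Jop in H. rewrite H1, H2 in H.
  pose proof (f_equal fst H) as Ha. pose proof (f_equal snd H) as Hb.
  unfold Cadd, Cmul, C0, Re, Im in *; simpl in *.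
  apply Cplx_eq; simpl; lra.
Qed.

Lemma rec_zero d u l m : (forall n, Jop d u n = Cmul l (u n)) ->
  u m = C0 -> u (m+1)%Z = C0 -> forall n, u n = C0.
Proof.
  intros H H0 H1.
  assert (F : forall k : nat, u (m + Z.of_nat k)%Z = C0 /\ u (m + Z.of_nat k + 1)%Z = C0).
  { induction k as [|k [IH1 IH2]].
    - simpl. rewrite Z.add_0_r. auto.
    - replace (m + Z.of_nat (S k))%Z with (m + Z.of_nat k + 1)%Z by lia. split; auto.
      apply step_fwd with d l; auto. replace (m + Z.of_nat k + 1 - 1)%Z with (m + Z.of_nat k)%Z by lia.
      auto. }
  assert (G : forall k : nat, u (m - Z.of_nat k)%Z = C0 /\ u (m - Z.of_nat k + 1)%Z = C0).
  { induction k as [|k [IH1 IH2]].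
    - simpl. rewrite Z.sub_0_r. auto.
    - replace (m - Z.of_nat (S k))%Z with (m - Z.of_nat k - 1)%Z by lia.
      replace (m - Z.of_nat k - 1 + 1)%Z with (m - Z.of_nat k)%Z by lia. split; auto.
      apply step_bwd with d l; auto. }
  intros n. destruct (Z_le_dec m n).
  - replace n with (m + Z.of_nat (Z.to_nat (n - m)))%Z by (rewrite Z2Nat.id; lia).
    apply F.
  - replace n with (m - Z.of_nat (Z.to_nat (m - n)))%Z by (rewrite Z2Nat.id; lia).
    apply G.
Qed.

Lemma find_j d u l
  (hlim : (forall eps : R, 0 < eps -> exists N : Z, forall n : Z, (N <= n)%Z -> Rabs (Im (d n)) < eps)
       \/ (forall eps : R, 0 < eps -> exists N : Z, forall n : Z, (n <= N)%Z -> Rabs (Im (d n)) < eps))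
  (hm : exists m : Z, Im (d m) <> 0 /\ Im (d (m + 1)%Z) <> 0)
  (Hev : forall n, Jop d u n = Cmul l (u n)) (Hnz : exists n, u n <> C0) :
  exists j, u j <> C0 /\ Im (d j) <> Im l.
Proof.
  apply NNPP. intros Hno.
  assert (K : forall j, Im (d j) <> Im l -> u j = C0).
  { intros j Hj. apply NNPP. intros Hu. apply Hno. exists j. auto. }
  destruct Hnz as [n0 Hn0]. apply Hn0.
  destruct (Req_dec (Im l) 0) as [Hl|Hl].
  - destruct hm as [m [Hm1 Hm2]].
    apply (rec_zero d u l m Hev); apply K; rewrite Hl; auto.
  - assert (Hp : 0 < Rabs (Im l)) by (apply Rabs_pos_lt; auto).
    destruct hlim as [Hf|Hb].
    + destruct (Hf _ Hp) as [N HN].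
      assert (Kn : forall n, (N <= n)%Z -> u n = C0).
      { intros n Hn. apply K. intros E. specialize (HN n Hn). rewrite E in HN. lra. }
      apply (rec_zero d u l N Hev); apply Kn; lia.
    + destruct (Hb _ Hp) as [N HN].
      assert (Kn : forall n, (n <= N)%Z -> u n = C0).
      { intros n Hn. apply K. intros E. specialize (HN n Hn). rewrite E in HN. lra. }
      apply (rec_zero d u l (N-1) Hev); apply Kn; lia.
Qed.

Definition Cscal (s : R) (z : Cplx) : Cplx := (s * Re z, s * Im z).

Lemma Cnorm2_scal s z : Cnorm2 (Cscal s z) = s * s * Cnorm2 z.
Proof. destruct z; unfold Cnorm2, Cscal, Re, Im; simpl; ring. Qed.

Lemma Jop_scal d x s n : Jop d (fun m => Cscal s (x m)) n = Cscal s (Jop d x n).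
Proof.
  unfold Jop. destruct (x (n-1)%Z), (x n), (x (n+1)%Z), (d n).
  unfold Cscal, Cadd, Cmul, Re, Im; simpl. apply Cplx_eq; simpl; ring.
Qed.

Lemma inner_scal s a b : Cmul (Cscal s a) (Cconj (Cscal s b)) = Cscal (s*s) (Cmul a (Cconj b)).
Proof.
  destruct a, b. unfold Cscal, Cmul, Cconj, Re, Im; simpl. apply Cplx_eq; simpl; ring.
Qed.

Lemma Cnorm2_nonneg z : 0 <= Cnorm2 z.
Proof. unfold Cnorm2. nra. Qed.

Lemma scale_num d x N V : Zseries (fun n => Cnorm2 (x n)) N -> 0 < N ->
  ZseriesC (fun n => Cmul (Jop d x n) (Cconj (x n))) V ->
  NumRange d (Re V / N, Im V / N).
Proof.
  intros HN Hpos [HV1 HV2].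
  set (s := / sqrt N).
  assert (Hss : s * s = / N).
  { unfold s. rewrite <- Rinv_mult. rewrite sqrt_sqrt; lra. }
  exists (fun n => Cscal s (x n)). split.
  - unfold l2_norm2_is. replace 1 with (s * s * N) by (rewrite Hss; field; lra).
    eapply Zseries_ext; [|exact (Zseries_scal (s*s) _ _ HN)].
    intros n. simpl. rewrite Cnorm2_scal. ring.
  - unfold inner_is, ZseriesC. split.
    + replace (Re (Re V / N, Im V / N)) with (s * s * Re V) by (rewrite Hss; simpl; unfold Rdiv; ring).
      eapply Zseries_ext; [|exact (Zseries_scal (s*s) _ _ HV1)].
      intros n. cbv beta. rewrite (Jop_scal d x s n), inner_scal. reflexivity.
    + replace (Im (Re V / N, Im V / N)) with (s * s * Im V) by (rewrite Hss; simpl; unfold Rdiv; ring).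
      eapply Zseries_ext; [|exact (Zseries_scal (s*s) _ _ HV2)].
      intros n. cbv beta. rewrite (Jop_scal d x s n), inner_scal. reflexivity.
Qed.

Definition ev (j : Z) (v : Cplx) (n : Z) : Cplx := if Z.eq_dec n j then v else C0.
Definition xvec (u : Z -> Cplx) (al v : Cplx) (j : Z) (n : Z) : Cplx :=
  Cadd (Cmul al (u n)) (ev j v n).

Definition Vx (al l v a1 p a2 dj : Cplx) : Cplx :=
 Cadd (Cadd (Cadd (Cscal (Cnorm2 al) l) (Cmul v (Cconj (Cmul al a1))))
   (Csub (Cmul (Cadd (Cmul al (Cmul l p)) (Cmul v dj)) (Cconj (Cadd (Cmul al p) v)))
         (Cscal (Cnorm2 al * Cnorm2 p) l)))
   (Cmul v (Cconj (Cmul al a2))).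

Definition Nx (al v p : Cplx) : R :=
  Cnorm2 al + Cnorm2 (Cadd (Cmul al p) v) - Cnorm2 al * Cnorm2 p.

Lemma Jop_lin d u e al n :
  Jop d (fun m => Cadd (Cmul al (u m)) (e m)) n = Cadd (Cmul al (Jop d u n)) (Jop d e n).
Proof.
  unfold Jop. destruct (u (n-1)%Z), (u n), (u (n+1)%Z), (e (n-1)%Z), (e n), (e (n+1)%Z), (d n), al.
  unfold Cadd, Cmul, Re, Im; simpl. apply Cplx_eq; simpl; ring.
Qed.

Lemma ev_off j v n : n <> j -> ev j v n = C0.
Proof. intros H. unfold ev. destruct (Z.eq_dec n j); [lia|reflexivity]. Qed.
Lemma ev_on j v : ev j v j = v.
Proof. unfold ev. destruct (Z.eq_dec j j); [reflexivity|lia]. Qed.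

Lemma Jev_off d j v n : n <> (j-1)%Z -> n <> j -> n <> (j+1)%Z -> Jop d (ev j v) n = C0.
Proof.
  intros H1 H2 H3. unfold Jop. rewrite !ev_off by lia.
  unfold Cadd, Cmul, C0, Re, Im; simpl. apply Cplx_eq; simpl; ring.
Qed.

Lemma xvec_norm u al v j : Zseries (fun n => Cnorm2 (u n)) 1 ->
  Zseries (fun n => Cnorm2 (xvec u al v j n)) (Nx al v (u j)).
Proof.
  intros Hu.
  pose proof (Zseries_3 (fun n => Cnorm2 (u n)) (fun n => Cnorm2 (xvec u al v j n))
     (Cnorm2 al) 1 j Hu) as H.
  cbv beta in H.
  replace (Nx al v (u j)) with
    (Cnorm2 al * 1 + (Cnorm2 (xvec u al v j (j - 1)) - Cnorm2 al * Cnorm2 (u (j - 1)%Z)) +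
      (Cnorm2 (xvec u al v j j) - Cnorm2 al * Cnorm2 (u j)) +
      (Cnorm2 (xvec u al v j (j + 1)) - Cnorm2 al * Cnorm2 (u (j + 1)%Z))).
  - apply H. intros n H1 H2 H3. unfold xvec. rewrite ev_off by auto.
    destruct al, (u n). unfold Cnorm2, Cadd, Cmul, C0, Re, Im; simpl; ring.
  - unfold xvec. rewrite ev_on, !ev_off by lia. unfold Nx.
    destruct al, (u (j-1)%Z), (u j), (u (j+1)%Z), v.
    unfold Cnorm2, Cadd, Cmul, C0, Re, Im; simpl; ring.
Qed.

Lemma xvec_inner d u l al v j : Zseries (fun n => Cnorm2 (u n)) 1 ->
  (forall n, Jop d u n = Cmul l (u n)) ->
  ZseriesC (fun n => Cmul (Jop d (xvec u al v j) n) (Cconj (xvec u al v j n)))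
    (Vx al l v (u (j-1)%Z) (u j) (u (j+1)%Z) (d j)).
Proof.
  intros Hu Hev.
  assert (HJ : forall n, Jop d (xvec u al v j) n = Cadd (Cmul al (Cmul l (u n))) (Jop d (ev j v) n)).
  { intros n. unfold xvec. rewrite (Jop_lin d u (ev j v) al n), Hev. reflexivity. }
  assert (HJm : Jop d (ev j v) (j-1)%Z = v).
  { unfold Jop. replace (j-1+1)%Z with j by lia. rewrite ev_on. rewrite !ev_off by lia.
    destruct v; unfold Cadd, Cmul, C0, Re, Im; simpl. apply Cplx_eq; simpl; ring. }
  assert (HJ0 : Jop d (ev j v) j = Cmul (d j) v).
  { unfold Jop. rewrite ev_on, !ev_off by lia.
    destruct v, (d j); unfold Cadd, Cmul, C0, Re, Im; simpl. apply Cplx_eq; simpl; ring. }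
  assert (HJp : Jop d (ev j v) (j+1)%Z = v).
  { unfold Jop. replace (j+1-1)%Z with j by lia. rewrite ev_on. rewrite !ev_off by lia.
    destruct v; unfold Cadd, Cmul, C0, Re, Im; simpl. apply Cplx_eq; simpl; ring. }
  split.
  - pose proof (Zseries_3 (fun n => Cnorm2 (u n))
       (fun n => Re (Cmul (Jop d (xvec u al v j) n) (Cconj (xvec u al v j n))))
       (Cnorm2 al * Re l) 1 j Hu) as H.
    cbv beta in H. rewrite !HJ, HJm, HJ0, HJp in H.
    unfold xvec in H. rewrite ev_on, !ev_off in H by lia.
    match type of H with ?P -> Zseries _ ?val =>
      replace (Re (Vx al l v (u (j - 1)%Z) (u j) (u (j + 1)%Z) (d j))) with val end.
    + apply H. intros n H1 H2 H3. rewrite HJ, Jev_off by auto. unfold xvec. rewrite ev_off by auto.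
      destruct al, l, (u n). unfold Cnorm2, Cadd, Cmul, Cconj, C0, Re, Im; simpl; ring.
    + unfold Vx. destruct al, l, v, (u (j-1)%Z), (u j), (u (j+1)%Z), (d j).
      unfold Cnorm2, Cadd, Csub, Cscal, Cmul, Cconj, C0, Re, Im; simpl; ring.
  - pose proof (Zseries_3 (fun n => Cnorm2 (u n))
       (fun n => Im (Cmul (Jop d (xvec u al v j) n) (Cconj (xvec u al v j n))))
       (Cnorm2 al * Im l) 1 j Hu) as H.
    cbv beta in H. rewrite !HJ, HJm, HJ0, HJp in H.
    unfold xvec in H. rewrite ev_on, !ev_off in H by lia.
    match type of H with ?P -> Zseries _ ?val =>
      replace (Im (Vx al l v (u (j - 1)%Z) (u j) (u (j + 1)%Z) (d j))) with val end.
    + apply H. intros n H1 H2 H3. rewrite HJ, Jev_off by auto. unfold xvec. rewrite ev_off by auto.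
      destruct al, l, (u n). unfold Cnorm2, Cadd, Cmul, Cconj, C0, Re, Im; simpl; ring.
    + unfold Vx. destruct al, l, v, (u (j-1)%Z), (u j), (u (j+1)%Z), (d j).
      unfold Cnorm2, Cadd, Csub, Cscal, Cmul, Cconj, C0, Re, Im; simpl; ring.
Qed.

Lemma I1 (l1 l2 d1 d2 p1 p2 a11 a12 v1 v2 : R) :
  let l := (l1, l2) in let dj := (d1, d2) in let p := (p1, p2) in let a1 := (a11, a12) in
  let a2 := Csub (Cmul l p) (Cadd (Cmul dj p) a1) in
  let v := (v1, v2) in
  let al := Csub (1, 0) (Cmul v (Cconj p)) in
  let g := d2 - l2 in
  let b1 := 2 * g * p2 in let b2 := 2 * g * p1 in
  let e1 := d1 - l1 in let e2 := d2 - l2 - 2 * g * (p1^2 + p2^2) in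
  let nv := v1^2 + v2^2 in
  Nx al v p = 1 + (1 - (p1^2+p2^2)) * nv /\
  Re (Vx al l v a1 p a2 dj) = l1 * Nx al v p + (v1 * b1 - v2 * b2) + nv * e1 /\
  Im (Vx al l v a1 p a2 dj) = l2 * Nx al v p + (v1 * b2 + v2 * b1) + nv * e2.
Proof.
  intros. unfold Nx, Vx, al, a2, l, dj, p, a1, v, nv, b1, b2, e1, e2, g.
  unfold Cnorm2, Cadd, Csub, Cscal, Cmul, Cconj, C0, Re, Im; simpl.
  repeat split; ring.
Qed.

Lemma quad A K P : 0 <= A -> 0 <= K -> 0 < P -> 0 <= P^2 - 4*K*A ->
  let r := 2 * A / (P + sqrt (P^2 - 4*K*A)) in 0 <= r /\ K * r^2 - P * r + A = 0.
Proof.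
  intros HA HK HP HD r.
  set (S := sqrt (P^2 - 4*K*A)).
  assert (HS : 0 <= S) by apply sqrt_pos.
  assert (HS2 : S * S = P^2 - 4*K*A) by (apply sqrt_sqrt; lra).
  split.
  - unfold r. fold S. unfold Rdiv. apply Rmult_le_pos; [lra|]. left. apply Rinv_0_lt_compat. lra.
  - unfold r. fold S. field_simplify; [|lra].
    replace (S^2) with (S*S) by ring. rewrite HS2.
    unfold Rdiv. apply Rmult_eq_0_compat_r. ring.
Qed.

Lemma small B c E e1 e2 h1 h2 : 0 < B -> E = e1^2 + e2^2 ->
  h1^2 + h2^2 < (Rmin 1 (B / (8 * (c^2 + E + 1))))^2 ->
  let k1 := h1 * c - e1 in let k2 := h2 * c - e2 in
  let A := h1^2 + h2^2 in let K := k1^2 + k2^2 in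
  let P := B - 2 * (h1 * k1 + h2 * k2) in
  0 < P /\ 0 <= P^2 - 4 * K * A.
Proof.
  intros HB HE Hh k1 k2 A K P.
  set (M := c^2 + E + 1) in *.
  assert (HM : 1 <= M) by (unfold M; nra).
  set (eps := Rmin 1 (B / (8 * M))) in *.
  assert (He1 : eps <= 1) by apply Rmin_l.
  assert (He2 : eps <= B / (8 * M)) by apply Rmin_r.
  assert (He0 : 0 < eps).
  { unfold eps. apply Rmin_glb_lt; [lra|]. apply Rdiv_lt_0_compat; lra. }
  assert (HA0 : 0 <= A) by (unfold A; nra).
  assert (Heps1 : eps^2 <= 1).
  { assert (eps * eps <= 1 * 1) by (apply Rmult_le_compat; lra). simpl. lra. }
  assert (HA1 : A < 1) by (unfold A; lra).
  assert (HA2 : A * (64 * M * M) < B * B).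
  { assert (eps * (8*M) <= B).
    { apply (Rmult_le_compat_r (8*M)) in He2; [|lra].
      unfold Rdiv in He2. rewrite Rmult_assoc, Rinv_l in He2 by lra. lra. }
    assert (H8 : 0 <= eps * (8*M)) by nra.
    assert (H9 : (eps*(8*M))*(eps*(8*M)) <= B*B) by (apply Rmult_le_compat; lra).
    assert (Hepsq : eps^2 * (64 * M * M) <= B * B) by (simpl; nra).
    assert (H10 : A * (64 * M * M) < eps^2 * (64 * M * M)).
    { apply Rmult_lt_compat_r; [nra|]. unfold A; lra. }
    lra. }
  assert (HK : K <= 2 * M).
  { assert (Q1 : (h1*c - e1)^2 <= 2*(h1^2*c^2 + e1^2)).
    { assert (0 <= (h1*c+e1)^2) by apply pow2_ge_0. simpl in *. nra. }
    assert (Q2 : (h2*c - e2)^2 <= 2*(h2^2*c^2 + e2^2)).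
    { assert (0 <= (h2*c+e2)^2) by apply pow2_ge_0. simpl in *. nra. }
    assert (Q3 : A * c^2 <= c^2).
    { assert (0 <= c^2) by apply pow2_ge_0. nra. }
    unfold K, k1, k2, M. rewrite HE. unfold A in Q3. lra. }
  assert (HK0 : 0 <= K) by (unfold K; nra).
  assert (HAK : 16 * A * K * 2 < B * B).
  { assert (T1 : A * K <= A * (2*M)) by (apply Rmult_le_compat_l; lra).
    assert (T2 : 0 <= A*M*(M-1)) by (apply Rmult_le_pos; [apply Rmult_le_pos|]; lra).
    assert (T3 : A * (2*M) * 32 <= A * 64 * M * M) by (ring_simplify; ring_simplify in T2; lra).
    lra. }
  assert (HC : (h1 * k1 + h2 * k2)^2 <= A * K).
  { unfold A, K. assert (0 <= (h1*k2 - h2*k1)^2) by apply pow2_ge_0. simpl in *. nra. }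
  set (R0 := h1 * k1 + h2 * k2) in *.
  assert (HR : 4 * R0^2 * 4 < B * B) by nra.
  assert (HR2 : 2 * R0 < B / 2 /\ - (B/2) < 2 * R0).
  { assert (Hab : Rabs (2*R0) < Rabs (B/2)).
    { apply Rsqr_lt_abs_0. unfold Rsqr. simpl in HR. lra. }
    rewrite (Rabs_right (B/2)) in Hab by lra.
    apply Rabs_def2 in Hab. lra. }
  unfold P. split; [lra|].
  assert (P1 : B/2 < B - 2*R0) by lra.
  assert (P2 : (B/2)*(B/2) < (B - 2*R0)*(B - 2*R0)) by (apply Rmult_le_0_lt_compat; lra).
  nra.
Qed.

Lemma pow2_gt_0 x : x <> 0 -> 0 < x^2.
Proof. intros H. replace (x^2) with (Rsqr x) by (unfold Rsqr; ring). apply Rsqr_pos_lt; auto. Qed.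

Lemma interior_ev d u l j : Zseries (fun n => Cnorm2 (u n)) 1 ->
  (forall n, Jop d u n = Cmul l (u n)) -> u j <> C0 -> Im (d j) <> Im l ->
  in_interior (NumRange d) l.
Proof.
  intros Hu Hev Hp Hg.
  assert (Hp1 : Cnorm2 (u j) <= 1).
  { apply (Zseries_ge (fun n => Cnorm2 (u n)) 1 j Hu). intros; apply Cnorm2_nonneg. }
  pose proof (Hev j) as Hej.
  unfold Jop in Hej.
  destruct l as [l1 l2].
  destruct (u j) as [p1 p2] eqn:Ep.
  destruct (d j) as [d1 d2] eqn:Ed.
  destruct (u (j-1)%Z) as [a11 a12] eqn:Ea1.
  assert (Ha2 : u (j+1)%Z = Csub (Cmul (l1,l2) (p1,p2)) (Cadd (Cmul (d1,d2) (p1,p2)) (a11,a12))).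
  { destruct (u (j+1)%Z) as [b1 b2].
    pose proof (f_equal fst Hej) as Q1. pose proof (f_equal snd Hej) as Q2.
    unfold Cadd, Csub, Cmul, Re, Im in *; simpl in *. apply Cplx_eq; simpl; lra. }
  unfold Im in Hg; simpl in Hg.
  unfold Cnorm2, Re, Im in Hp1; simpl in Hp1.
  assert (Hpp : 0 < p1^2 + p2^2).
  { destruct (Req_dec p1 0); destruct (Req_dec p2 0).
    - subst. exfalso. apply Hp. reflexivity.
    - assert (0 < p2^2) by (apply pow2_gt_0; auto). pose proof (pow2_ge_0 p1). lra.
    - assert (0 < p1^2) by (apply pow2_gt_0; auto). pose proof (pow2_ge_0 p2). lra.
    - assert (0 < p2^2) by (apply pow2_gt_0; auto). pose proof (pow2_ge_0 p1). lra. }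
  set (g := d2 - l2).
  assert (Hg0 : g <> 0) by (unfold g; lra).
  set (b1 := 2 * g * p2). set (b2 := 2 * g * p1).
  set (B := b1^2 + b2^2).
  assert (HB : 0 < B).
  { unfold B, b1, b2. replace ((2*g*p2)^2 + (2*g*p1)^2) with ((2*g)^2 * (p1^2+p2^2)) by ring.
    apply Rmult_lt_0_compat; [apply pow2_gt_0; lra|lra]. }
  set (c := 1 - (p1^2 + p2^2)).
  set (e1 := d1 - l1). set (e2 := d2 - l2 - 2 * g * (p1^2 + p2^2)).
  set (E := e1^2 + e2^2).
  exists (Rmin 1 (B / (8 * (c^2 + E + 1)))). split.
  { apply Rmin_glb_lt; [lra|]. apply Rdiv_lt_0_compat; [lra|].
    pose proof (pow2_ge_0 c). assert (0 <= E) by (unfold E; pose proof (pow2_ge_0 e1); pose proof (pow2_ge_0 e2); lra). lra. }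
  intros [w1 w2] Hw.
  set (h1 := w1 - l1). set (h2 := w2 - l2).
  assert (Hh : h1^2 + h2^2 < (Rmin 1 (B / (8 * (c^2 + E + 1))))^2).
  { unfold Cmod, Cnorm2, Csub, Re, Im in Hw; cbn [fst snd] in Hw. fold h1 h2 in Hw.
    set (x := h1^2 + h2^2) in *.
    assert (0 <= x) by (unfold x; pose proof (pow2_ge_0 h1); pose proof (pow2_ge_0 h2); lra).
    rewrite <- (sqrt_sqrt x) by lra.
    pose proof (sqrt_pos x).
    replace ((Rmin 1 (B / (8 * (c ^ 2 + E + 1)))) ^ 2) with
      ((Rmin 1 (B / (8 * (c ^ 2 + E + 1)))) * (Rmin 1 (B / (8 * (c ^ 2 + E + 1))))) by ring.
    apply Rmult_le_0_lt_compat; lra. }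
  pose proof (small B c E e1 e2 h1 h2 HB eq_refl Hh) as Hs. cbv zeta in Hs.
  destruct Hs as [HP HD].
  set (k1 := h1 * c - e1) in *. set (k2 := h2 * c - e2) in *.
  set (A := h1^2 + h2^2) in *. set (K := k1^2 + k2^2) in *.
  set (P := B - 2 * (h1 * k1 + h2 * k2)) in *.
  assert (HA : 0 <= A) by (unfold A; pose proof (pow2_ge_0 h1); pose proof (pow2_ge_0 h2); lra).
  assert (HK : 0 <= K) by (unfold K; pose proof (pow2_ge_0 k1); pose proof (pow2_ge_0 k2); lra).
  pose proof (quad A K P HA HK HP HD) as Hq. cbv zeta in Hq.
  set (r := 2 * A / (P + sqrt (P ^ 2 - 4 * K * A))) in *.
  destruct Hq as [Hr Hq].
  set (wv1 := h1 + r * k1). set (wv2 := h2 + r * k2).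
  set (v1 := (wv1 * b1 + wv2 * b2) / B). set (v2 := (wv2 * b1 - wv1 * b2) / B).
  set (al := Csub (1, 0) (Cmul (v1, v2) (Cconj (p1, p2)))).
  pose proof (I1 l1 l2 d1 d2 p1 p2 a11 a12 v1 v2) as HI. cbv zeta in HI.
  fold g in HI. fold b1 b2 e1 e2 in HI. fold al in HI.
  destruct HI as [HN [HRe HIm]].
  assert (Hvb1 : v1 * b1 - v2 * b2 = wv1) by (unfold v1, v2, B; field; unfold B in HB; lra).
  assert (Hvb2 : v1 * b2 + v2 * b1 = wv2) by (unfold v1, v2, B; field; unfold B in HB; lra).
  assert (Hnv : v1^2 + v2^2 = r).
  { assert (Hw2 : wv1^2 + wv2^2 = r * B).
    { assert (Hid : wv1^2 + wv2^2 - r * B = K * r^2 - P * r + A) by (unfold wv1, wv2, K, P, A; ring).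
      lra. }
    assert (Hq2 : v1^2 + v2^2 = (wv1^2 + wv2^2) / B)
      by (unfold v1, v2, B; field; unfold B in HB; lra).
    rewrite Hq2, Hw2. field. lra. }
  rewrite Hnv in HN, HRe, HIm. rewrite Hvb1 in HRe. rewrite Hvb2 in HIm.
  set (N := Nx al (v1, v2) (p1, p2)) in *.
  assert (HNpos : 0 < N).
  { rewrite HN. fold c. assert (0 <= c) by (unfold c; lra). nra. }
  pose proof (scale_num d (xvec u al (v1, v2) j) N
      (Vx al (l1, l2) (v1, v2) (a11, a12) (p1, p2)
          (Csub (Cmul (l1, l2) (p1, p2)) (Cadd (Cmul (d1, d2) (p1, p2)) (a11, a12))) (d1, d2))) as HS.
  replace (w1, w2) with
    (Re (Vx al (l1, l2) (v1, v2) (a11, a12) (p1, p2)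
          (Csub (Cmul (l1, l2) (p1, p2)) (Cadd (Cmul (d1, d2) (p1, p2)) (a11, a12))) (d1, d2)) / N,
     Im (Vx al (l1, l2) (v1, v2) (a11, a12) (p1, p2)
          (Csub (Cmul (l1, l2) (p1, p2)) (Cadd (Cmul (d1, d2) (p1, p2)) (a11, a12))) (d1, d2)) / N).
  - apply HS; [| exact HNpos |].
    + unfold N. rewrite <- Ep. apply xvec_norm. exact Hu.
    + rewrite <- Ha2, <- Ep, <- Ed, <- Ea1. apply xvec_inner; assumption.
  - rewrite HRe, HIm. apply Cplx_eq; simpl.
    + apply (Rmult_eq_reg_r N); [|lra]. field_simplify; [|lra].
      rewrite HN. unfold wv1, k1, h1, c. ring.
    + apply (Rmult_eq_reg_r N); [|lra]. field_simplify; [|lra].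
      rewrite HN. unfold wv2, k2, h2, c, e2, g. ring.
Qed.

Lemma Cnorm2_pos z : z <> C0 -> 0 < Cnorm2 z.
Proof.
  intros Hz. destruct z as [p1 p2]. unfold Cnorm2, Re, Im; cbn [fst snd].
  destruct (Req_dec p1 0); destruct (Req_dec p2 0).
  - subst. exfalso. apply Hz. reflexivity.
  - assert (0 < p2^2) by (apply pow2_gt_0; auto). pose proof (pow2_ge_0 p1). lra.
  - assert (0 < p1^2) by (apply pow2_gt_0; auto). pose proof (pow2_ge_0 p2). lra.
  - assert (0 < p2^2) by (apply pow2_gt_0; auto). pose proof (pow2_ge_0 p1). lra.
Qed.

Theorem mainTheorem9 (d : Z -> Cplx)
  (hbdd : exists M : R, forall n : Z, Cmod (d n) <= M)
  (hlim : (forall eps : R, 0 < eps -> exists N : Z, forall n : Z, (N <= n)%Z -> Rabs (Im (d n)) < eps)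
       \/ (forall eps : R, 0 < eps -> exists N : Z, forall n : Z, (n <= N)%Z -> Rabs (Im (d n)) < eps))
  (hm : exists m : Z, Im (d m) <> 0 /\ Im (d (m + 1)%Z) <> 0) :
  ~ (exists lam : Cplx, is_boundary_eigenvalue d lam).
Proof.
  intros [lam [[u0 [[l0 Hl0] [[n0 Hn0] Hev0]]] [_ Hnint]]].
  assert (Hl : 0 < l0).
  { apply (Zseries_pos _ l0 n0 Hl0); [intros; apply Cnorm2_nonneg|]. apply Cnorm2_pos; auto. }
  set (s := / sqrt l0).
  assert (Hss : s * s = / l0).
  { unfold s. rewrite <- Rinv_mult. rewrite sqrt_sqrt; lra. }
  assert (Hs0 : s <> 0).
  { unfold s. apply Rinv_neq_0_compat. apply Rgt_not_eq. apply sqrt_lt_R0. lra. }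
  set (u := fun n => Cscal s (u0 n)).
  assert (Hu : Zseries (fun n => Cnorm2 (u n)) 1).
  { replace 1 with (s * s * l0) by (rewrite Hss; field; lra).
    eapply Zseries_ext; [|exact (Zseries_scal (s*s) _ _ Hl0)].
    intros n. unfold u. rewrite Cnorm2_scal. ring. }
  assert (Hev : forall n, Jop d u n = Cmul lam (u n)).
  { intros n. unfold u. rewrite (Jop_scal d u0 s n), Hev0.
    destruct lam, (u0 n). unfold Cscal, Cmul, Re, Im; cbn [fst snd]. apply Cplx_eq; cbn [fst snd]; ring. }
  assert (Hnz : exists n, u n <> C0).
  { exists n0. unfold u. intros E. apply Hn0.
    destruct (u0 n0) as [a b] eqn:Eu. unfold Cscal, C0, Re, Im in E; cbn [fst snd] in E.
    injection E as E1 E2. apply Rmult_integral in E1. apply Rmult_integral in E2.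
    destruct E1; [contradiction|]. destruct E2; [contradiction|]. subst; reflexivity. }
  destruct (find_j d u lam hlim hm Hev Hnz) as [j [Hj1 Hj2]].
  apply Hnint. exact (interior_ev d u lam j Hu Hev Hj1 Hj2).
Qed.
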